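(* Let $I=\mathcal{M}^0[K,G,K;P]$ be a finite Rees $0$-matrix semigroup with $|K|=2$, where $P$ is the $2\times2$ matrix with $p_{\kappa,\kappa}=e$ and $p_{\lambda,\kappa}=0$ for $\lambda\ne\kappa$. If $|G|=1$, then $\sigma_i(I)=\infty$. If $|G|>1$, then $\sigma_i(I)=n+1$, where $n$ is the minimum index of a proper subgroup of $G$.
   Context: $G$ is a finite group with identity $e$. $\mathcal{M}^0[K,G,K;P]$ is $(K\times G\times K)\cup\{0\}$ with $(\kappa,g,\lambda)(\mu,h,\nu)=(\kappa,gp_{\lambda,\mu}h,\nu)$ if $p_{\lambda,\mu}\ne0$, $=0$ otherwise, and $0$ a zero element; it is an inverse semigroup. An inverse subsemigroup is a subsemigroup closed under taking the unique inverse $a^{-1}$ (with $aa^{-1}a=a$, $a^{-1}aa^{-1}=a^{-1}$). $\sigma_i(I)$ is the least positive integer $n$ such that $I$ is the union of $n$ proper inverse subsemigroups, or $\infty$ if none exists. *)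

(* Defs.v *)
From HB Require Import structures.
From mathcomp Require Import all_boot all_order all_fingroup.
Set Implicit Arguments. Unset Strict Implicit. Unset Printing Implicit Defensive.

Section Rees.
Variables (K : finType) (gT : finGroupType).

(* Elements of M^0[K,G,K;P]: None is the zero 0, Some (k,g,l) is (k,g,l). *)
Definition rees := option (K * gT * K).

Definition sandwich (l m : K) : option gT := if l == m then Some 1%g else None.

Definition rmul (a b : rees) : rees :=
  match a, b with
  | Some (k, g, l), Some (m, h, n) =>
      match sandwich l m with
      | Some p => Some (k, (g * p * h)%g, n)
      | None => None
      end
  | _, _ => None
  end.

Definition is_inverse (a b : rees) : Prop :=
  rmul (rmul a b) a = a /\ rmul (rmul b a) b = b.

Definition is_subsemigroup (S : {set rees}) : Prop :=
  S != set0 /\ forall a b, a \in S -> b \in S -> rmul a b \in S.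

Definition inverse_closed (S : {set rees}) : Prop :=
  forall a b, a \in S -> is_inverse a b -> b \in S.

Definition proper_inverse_subsemigroup (S : {set rees}) : Prop :=
  [/\ is_subsemigroup S, inverse_closed S & S != setT].

Definition inverse_cover (F : seq {set rees}) : Prop :=
  (forall S, S \in F -> proper_inverse_subsemigroup S) /\
  \bigcup_(S <- F) S = setT.

(* sigma_i(I) = m, with None standing for infinity. *)
Definition sigma_i_is (m : option nat) : Prop :=
  match m with
  | Some n => [/\ 0 < n, exists F, inverse_cover F /\ size F = n
                & forall F, inverse_cover F -> n <= size F]
  | None => forall F, ~ inverse_cover F
  end.

End Rees.

Definition min_proper_index (gT : finGroupType) (G : {group gT}) (n : nat) : Prop :=
  (exists H : {group gT}, H \proper G /\ #|G : H|%g = n) /\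
  (forall H : {group gT}, H \proper G -> n <= #|G : H|%g).

(* Main.v *)
Require Import Defs.
From HB Require Import structures.
From mathcomp Require Import all_boot all_order all_fingroup.
From Stdlib Require Import Lia.
From mathcomp Require Import zify.
Set Implicit Arguments. Unset Strict Implicit. Unset Printing Implicit Defensive.

Definition rinv (K : finType) (gT : finGroupType) (a : rees K gT) : rees K gT :=
  if a is Some (k, g, l) then Some (l, g^-1%g, k) else None.

Lemma rmulE (K : finType) (gT : finGroupType) (k l m n : K) (g h : gT) :
  rmul (Some (k, g, l)) (Some (m, h, n)) =
  if l == m then Some (k, (g * h)%g, n) else None.
Proof. by rewrite /= /sandwich; case: eqP => // _; rewrite mulg1. Qed.

Lemma rmul0l (K : finType) (gT : finGroupType) (a : rees K gT) : rmul None a = None.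
Proof. by []. Qed.
Lemma rmul0r (K : finType) (gT : finGroupType) (a : rees K gT) : rmul a None = None.
Proof. by case: a => [[[]]|]. Qed.

Lemma inv_rinv (K : finType) (gT : finGroupType) (a : rees K gT) : is_inverse a (rinv a).
Proof.
case: a => [[[k g] l]|] //; split; rewrite /rinv rmulE eqxx rmulE eqxx.
  by rewrite mulgV mul1g.
by rewrite mulVg mul1g.
Qed.

Lemma inv_uniq (K : finType) (gT : finGroupType) (a b : rees K gT) :
  is_inverse a b -> b = rinv a.
Proof.
case: a => [[[k g] l]|]; last by case=> _; rewrite rmul0r.
case: b => [[[m h] n]|]; last by case; rewrite rmul0r.
case=> E _; move: E; rewrite rmulE; case: eqP => [<-|]; last by [].
rewrite rmulE; case: eqP => [->|]; last by [].
case=> /(congr1 (mulg^~ g^-1%g)) /=; rewrite mulgK mulgV => /eqP; rewrite -eq_invg_mul => /eqP ->.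
by [].
Qed.

Lemma K2 (K : finType) : #|K| = 2 ->
  exists k1 k2 : K, k1 != k2 /\ forall k, k = k1 \/ k = k2.
Proof.
rewrite cardE => hs.
have hu := enum_uniq (pred_of_simpl (@predT K)).
have hm : forall k : K, k \in enum K by move=> k; rewrite mem_enum.
move: hs hu hm; case: (enum K) => [|k1 [|k2 [|]]] //= _.
rewrite inE andbT => hne hm; exists k1, k2; split => // k.
by move: (hm k); rewrite !inE => /orP [] /eqP ->; [left|right].
Qed.

Lemma invcl_E (K : finType) (gT : finGroupType) (S : {set rees K gT}) :
  inverse_closed S -> forall a, a \in S -> rinv a \in S.
Proof. by move=> h a aS; apply: h aS (inv_rinv a). Qed.

Lemma invcl_I (K : finType) (gT : finGroupType) (S : {set rees K gT}) :
  (forall a, a \in S -> rinv a \in S) -> inverse_closed S.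
Proof. by move=> h a b aS /inv_uniq ->; apply: h. Qed.

Lemma full (K : finType) (gT : finGroupType) (k1 k2 : K) (hne : k1 != k2)
  (hall : forall k, k = k1 \/ k = k2) (S : {set rees K gT}) (g : gT) :
  is_subsemigroup S -> inverse_closed S -> Some (k1, g, k2) \in S ->
  (forall a, Some (k1, a, k1) \in S) -> S = setT.
Proof.
move=> [_ hM] hI hg h11.
have h12 : forall b, Some (k1, b, k2) \in S.
  move=> b; have := hM _ _ (h11 (b * g^-1)%g) hg.
  by rewrite rmulE eqxx mulgKV.
have h21 : forall b, Some (k2, b, k1) \in S.
  by move=> b; have := invcl_E hI (h12 b^-1%g); rewrite /= invgK.
have h22 : forall b, Some (k2, b, k2) \in S.
  by move=> b; have := hM _ _ (h21 b) (h12 1%g); rewrite rmulE eqxx mulg1.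
apply/setP => x; rewrite inE; case: x => [[[k b] l]|].
  case: (hall k) => ->; case: (hall l) => ->;
  by [apply: h11|apply: h12|apply: h21|apply: h22].
have := hM _ _ hg hg; rewrite rmulE eq_sym (negbTE hne) //.
Qed.

Lemma mem_bigcup_seq (T : finType) (I : Type) (L : seq I) (f : I -> {set T}) x :
  (x \in \bigcup_(i <- L) f i) = has (fun i => x \in f i) L.
Proof.
elim: L => [|i L IH]; first by rewrite big_nil inE.
by rewrite big_cons inE IH.
Qed.

Lemma cover_mem (K : finType) (gT : finGroupType) (F : seq {set rees K gT}) x :
  inverse_cover F -> exists2 S, S \in F & x \in S.
Proof.
move=> [_ hU]; have : x \in \bigcup_(S <- F) S by rewrite hU inE.
by rewrite mem_bigcup_seq => /hasP.
Qed.

Lemma part1 (K : finType) (gT : finGroupType) (hK : #|K| = 2) :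
  #|[set: gT]| = 1 -> sigma_i_is K gT None.
Proof.
move=> hG F hF; have [k1 [k2 [hne hall]]] := K2 hK.
have triv : forall a : gT, a = 1%g.
  move: hG => /eqP /cards1P [x hx] a.
  have : a \in [set: gT] by rewrite inE.
  have : (1%g : gT) \in [set: gT] by rewrite inE.
  by rewrite hx !inE => /eqP -> /eqP.
have [S SF xS] := cover_mem (Some (k1, 1%g, k2)) hF.
have [hS hI hne'] := hF.1 S SF.
suff h11 : forall a, Some (k1, a, k1) \in S.
  by move: hne'; rewrite (full hne hall hS hI xS h11) eqxx.
move=> a; rewrite (triv a).
have := hS.2 _ _ xS (invcl_E hI xS); rewrite /rinv rmulE eqxx mulgV.
by [].
Qed.

Definition cK (K : finType) (gT : finGroupType) (k1 : K) (x : gT) (k : K) : gT :=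
  if k == k1 then 1%g else x.

Definition fx (K : finType) (gT : finGroupType) (k1 : K) (x : gT) (a : rees K gT)
  : rees K gT :=
  if a is Some (k, g, l) then Some (k, (cK k1 x k * g * (cK k1 x l)^-1)%g, l)
  else None.

Definition TH (K : finType) (gT : finGroupType) (H : {set gT}) : {set rees K gT} :=
  [set a : rees K gT | if a is Some (_, g, _) then g \in H else true].

Arguments TH {K gT} H.

Definition Sx (K : finType) (gT : finGroupType) (H : {set gT}) (k1 : K) (x : gT)
  : {set rees K gT} := [set a | fx k1 x a \in TH H].

Definition S0 (K : finType) (gT : finGroupType) : {set rees K gT} :=
  [set a : rees K gT | if a is Some (k, _, l) then k == l else true].

Lemma fx_mul (K : finType) (gT : finGroupType) (k1 : K) (x : gT) a b :
  fx k1 x (rmul a b) = rmul (fx k1 x a) (fx k1 x b).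
Proof.
case: a => [[[k g] l]|] //; case: b => [[[m h] n]|]; last by rewrite !rmul0r.
rewrite /fx !rmulE; case: eqP => // <-.
by rewrite !mulgA mulgKV.
Qed.

Lemma fx_inv (K : finType) (gT : finGroupType) (k1 : K) (x : gT) a :
  fx k1 x (rinv a) = rinv (fx k1 x a).
Proof.
case: a => [[[k g] l]|] //=.
by rewrite !invMg invgK !mulgA.
Qed.

Lemma TH_mul (K : finType) (gT : finGroupType) (H : {group gT}) (a b : rees K gT) :
  a \in TH H -> b \in TH H -> rmul a b \in TH H.
Proof.
case: a => [[[k g] l]|]; last by rewrite rmul0l.
case: b => [[[m h] n]|]; last by rewrite rmul0r.
rewrite rmulE !inE; case: eqP => _; rewrite ?inE //.
exact: groupM.
Qed.

Lemma TH_inv (K : finType) (gT : finGroupType) (H : {group gT}) (a : rees K gT) :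
  a \in TH H -> rinv a \in TH H.
Proof. by case: a => [[[k g] l]|] //; rewrite /rinv !inE groupV. Qed.

Lemma memSx (K : finType) (gT : finGroupType) (H : {set gT}) (k1 : K) (x : gT) a :
  (a \in Sx H k1 x) = (fx k1 x a \in TH H).
Proof. by rewrite inE. Qed.

Lemma Sx_ok (K : finType) (gT : finGroupType) (H : {group gT}) (k1 : K) (x : gT) :
  H \proper [set: gT] -> proper_inverse_subsemigroup (Sx H k1 x).
Proof.
move=> /properP [_ [g _ gH]]; split.
- split.
    by apply/set0Pn; exists None; rewrite !inE.
  by move=> a b; rewrite !memSx fx_mul; apply: TH_mul.
- by apply: invcl_I => a; rewrite !memSx fx_inv; apply: TH_inv.
- apply/eqP => hT.
  have : Some (k1, g, k1) \in Sx H k1 x by rewrite hT inE.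
  by rewrite memSx /fx /cK eqxx invg1 mulg1 mul1g inE (negbTE gH).
Qed.

Lemma S0_ok (K : finType) (gT : finGroupType) (k1 k2 : K) : k1 != k2 ->
  proper_inverse_subsemigroup (S0 K gT).
Proof.
move=> hne; split.
- split.
    by apply/set0Pn; exists None; rewrite !inE.
  move=> [[[k g] l]|] [[[m h] n]|]; rewrite ?rmul0r ?rmul0l ?inE //.
  by rewrite rmulE => /eqP -> /eqP ->; case: eqP => // ->.
- by apply: invcl_I => [[[[k g] l]|]]; rewrite /rinv !inE // eq_sym.
- apply/eqP => hT.
  have : Some (k1, 1%g, k2) \in S0 K gT by rewrite hT inE.
  by rewrite inE (negbTE hne).
Qed.

Lemma upper (K : finType) (gT : finGroupType) (hK : #|K| = 2) (H : {group gT}) :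
  H \proper [set: gT] ->
  exists F : seq {set rees K gT}, inverse_cover F /\ size F = #|[set: gT] : H|%g.+1.
Proof.
move=> hH; have [k1 [k2 [hne hall]]] := K2 hK.
have h21 : (k2 == k1) = false by rewrite eq_sym (negbTE hne).
exists (S0 K gT :: [seq Sx H k1 (repr C) | C <- enum (rcosets H [set: gT])]).
split; last by rewrite /= size_map -cardE.
split.
  move=> S; rewrite inE => /orP [/eqP ->|/mapP [C _ ->]].
    exact: S0_ok hne.
  exact: Sx_ok.
apply/setP => a; rewrite inE mem_bigcup_seq /=.
case: a => [[[k g] l]|]; last by rewrite inE.
case: (boolP (k == l)) => [kl|kl]; first by rewrite inE kl.
apply/orP; right; apply/hasP.
have mC : forall y, repr (H :* y)%g \in [seq repr C | C <- enum (rcosets H [set: gT])].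
  move=> y; apply: map_f; rewrite mem_enum; apply/rcosetsP; exists y => //; rewrite inE.
case: (hall k) => hk; case: (hall l) => hl; subst k l; rewrite ?eqxx // in kl.
  exists (Sx H k1 (repr (H :* g)%g)).
    by rewrite map_comp; apply: map_f; apply: mC.
  rewrite memSx /fx /cK eqxx h21 inE mul1g -mem_rcoset rcoset_repr.
  exact: rcoset_refl.
exists (Sx H k1 (repr (H :* g^-1)%g)).
  by rewrite map_comp; apply: map_f; apply: mC.
rewrite memSx /fx /cK eqxx h21 inE invg1 mulg1.
have : g^-1%g \in (H :* repr (H :* g^-1))%g by rewrite rcoset_repr rcoset_refl.
by rewrite mem_rcoset -invMg groupV.
Qed.

Lemma ub (T : finType) (I : eqType) (L : seq I) (f : I -> {set T}) (c : I -> nat) n :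
  (forall i, i \in L -> n * #|f i| <= c i) ->
  n * #|\bigcup_(i <- L) f i| <= \sum_(i <- L) c i.
Proof.
elim: L => [|i L IH] h; first by rewrite big_nil cards0 muln0.
rewrite big_cons; apply: leq_trans (_ : n * (#|f i| + #|\bigcup_(j <- L) f j|) <= _).
  by rewrite leq_mul2l leq_card_setU orbT.
rewrite mulnDr big_cons; apply: leq_add; first by apply: h; rewrite inE eqxx.
by apply: IH => j jL; apply: h; rewrite inE jL orbT.
Qed.

Lemma sum_count (I : Type) (L : seq I) (P : pred I) k :
  \sum_(i <- L) (k * P i) = k * count P L.
Proof.
elim: L => [|i L IH]; first by rewrite big_nil muln0.
by rewrite big_cons IH /= mulnDr.
Qed.

Lemma sum_const (I : Type) (L : seq I) k : \sum_(i <- L) k = k * size L.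
Proof.
elim: L => [|i L IH]; first by rewrite big_nil muln0.
by rewrite big_cons IH /= mulnS.
Qed.

Definition AS (K : finType) (gT : finGroupType) (k1 k2 : K) (S : {set rees K gT})
  : {set gT} := [set g | Some (k1, g, k2) \in S].

Lemma per (K : finType) (gT : finGroupType) (k1 k2 : K) (hne : k1 != k2)
  (hall : forall k, k = k1 \/ k = k2) n (hmin : min_proper_index [set: gT]%G n)
  (S : {set rees K gT}) : proper_inverse_subsemigroup S -> AS k1 k2 S != set0 ->
  [/\ 1%g \in AS k1 k1 S, n * #|AS k1 k1 S| <= #|[set: gT]| & #|AS k1 k2 S| <= #|AS k1 k1 S|].
Proof.
move=> [hS hI hT] /set0Pn [a0]; rewrite inE => ha0.
have h1 : 1%g \in AS k1 k1 S.
  have := hS.2 _ _ ha0 (invcl_E hI ha0).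
  by rewrite /rinv rmulE eqxx mulgV inE.
have hgs : group_set (AS k1 k1 S).
  apply/group_setP; split => // x y; rewrite !inE => hx hy.
  by have := hS.2 _ _ hx hy; rewrite rmulE eqxx.
pose HG := Group hgs.
have hp : HG \proper [set: gT]%G.
  rewrite properT; apply/negP => /eqP /= hE; move/eqP: hT; apply.
  apply: (full hne hall hS hI ha0) => a.
  have : a \in AS k1 k1 S by rewrite hE inE.
  by rewrite inE.
split => //.
  have := hmin.2 _ hp.
  have := Lagrange (subsetT HG).
  move=> <- hn; rewrite mulnC leq_mul2l hn orbT //.
rewrite -(card_rcoset (AS k1 k1 S) a0); apply: subset_leq_card.
apply/subsetP => g; rewrite inE => hg; rewrite mem_rcoset inE.
have := hS.2 _ _ hg (invcl_E hI ha0).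
by rewrite /rinv rmulE eqxx.
Qed.

Lemma lower (K : finType) (gT : finGroupType) (hK : #|K| = 2) n
  (hmin : min_proper_index [set: gT]%G n) (F : seq {set rees K gT}) :
  inverse_cover F -> n < size F.
Proof.
move=> hF; have [k1 [k2 [hne hall]]] := K2 hK.
set g := #|[set: gT]|.
have n2 : 1 < n.
  have [[H [hp <-]] _] := hmin.
  by rewrite indexg_gt1; move: hp; rewrite properE => /andP [].
have hok := hF.1.
have hper := fun S SF => per hne hall hmin (hok S SF).
have c1 : n * g <= g * count (fun S => AS k1 k2 S != set0) F.
  rewrite -sum_count.
  have hU : [set: gT] = \bigcup_(S <- F) AS k1 k2 S.
    apply/setP => x; rewrite inE mem_bigcup_seq; apply/esym/hasP.
    have [S SF xS] := cover_mem (Some (k1, x, k2)) hF.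
    by exists S => //; rewrite inE.
  rewrite {1}/g hU; apply: ub => S SF; case: (boolP (AS k1 k2 S != set0)) => hA.
    have [_ h2 h3] := hper S SF hA; rewrite muln1.
    by apply: leq_trans h2; rewrite leq_mul2l h3 orbT.
  by move: hA; rewrite negbK => /eqP ->; rewrite cards0 muln0.
have gpos : 0 < g by apply/card_gt0P; exists 1%g; rewrite inE.
have c2 : n <= count (fun S => AS k1 k2 S != set0) F.
  by rewrite -(leq_pmul2r gpos); apply: (@leq_trans _ _ _ c1); rewrite mulnC.
rewrite ltnNge; apply/negP => hle.
have hcnt : count (fun S => AS k1 k2 S != set0) F = size F.
  by apply/eqP; rewrite eqn_leq count_size (leq_trans hle c2).
have hall' : forall S, S \in F -> AS k1 k2 S != set0.
  by apply/allP; rewrite all_count hcnt.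
clear hok c1; case: F hF hle hcnt hall' hper c2 => [|S0 F'] hF hle hcnt hall' hper c2.
  by move: c2; rewrite /= leqn0 => /eqP nz; rewrite nz in n2.
have [h01 h02 _] := hper S0 (mem_head _ _) (hall' _ (mem_head _ _)).
set U := \bigcup_(S <- F') (AS k1 k1 S :\ 1%g).
have c3 : g <= #|AS k1 k1 S0| + #|U|.
  apply: leq_trans (leq_card_setU _ _); apply: subset_leq_card.
  apply/subsetP => a _; rewrite inE.
  have [S SF aS] := cover_mem (Some (k1, a, k1)) hF.
  move: SF; rewrite inE => /orP [/eqP eS|SF'].
    by rewrite -eS inE aS.
  case: (eqVneq a 1%g) => [->|a1]; first by rewrite h01.
  apply/orP; right; rewrite mem_bigcup_seq; apply/hasP; exists S => //.
  by rewrite !inE a1.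
have c4 : n * #|U| <= (g - n) * size F'.
  rewrite -sum_const; apply: ub => S SF.
  have SF2 : S \in S0 :: F' by rewrite inE SF orbT.
  have [h1 h2 _] := hper S SF2 (hall' _ SF2).
  move: h2; rewrite (cardsD1 1%g) h1 /=.
  set x := #|_|; move=> h2.
  rewrite leq_subRL; first by rewrite -[n in n + _]muln1 -mulnDr add1n.
  by apply: leq_trans h2; rewrite leq_pmulr.
have c5 : n * g <= g + (g - n) * size F'.
  apply: leq_trans (_ : n * (#|AS k1 k1 S0| + #|U|) <= _); first by rewrite leq_mul2l c3 orbT.
  by rewrite mulnDr; apply: leq_add.
have gn : n <= g.
  apply: leq_trans h02; rewrite leq_pmulr //.
  by rewrite (cardD1 1%g) h01.
move: c5 hle gn n2 (subnK gn); rewrite /=; clear.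
move: (size F') (g - n) => m d.
move=> h1 h2 h3 h4 h5. rewrite -h5 in h1 h3.
nia.
Qed.

Theorem mainTheorem16 (K : finType) (gT : finGroupType) (hK : #|K| = 2) :
  (#|[set: gT]| = 1 -> sigma_i_is K gT None) /\
  (1 < #|[set: gT]| ->
     forall n, min_proper_index [set: gT]%G n -> sigma_i_is K gT (Some n.+1)).
Proof.
split; first exact: part1.
move=> _ n hmin; split => //.
  have [[H [hp hi]] _] := hmin.
  have [F [hF hs]] := upper hK hp.
  by exists F; split => //; rewrite hs hi.
by move=> F hF; apply: (lower hK hmin hF).
Qed.
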